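(* Let $1\le r\le s$ and let $H$ be a fixed $s$-uniform hypergraph with at least $s$ vertices. Then $\tau^{(r)}(H)\ge n^{\,r-1/\mu^{(r)}(H)}$; that is, for every strategy and every $t=t(n)=o(n^{\,r-1/\mu^{(r)}(H)})$, a.a.s. $G^{(r,s)}_t$ does not contain a copy of $H$.
   Context: Semi-random hypergraph process: fix integers $1\le r\le s$ and $n\ge s$. Start with the empty $s$-uniform multi-hypergraph $G_0^{(r,s)}$ on vertex set $[n]$. In each step $t\ge1$, a set $U_t$ of $r$ vertices is chosen uniformly at random among all $r$-subsets of $[n]$, independently of all previous choices; the player then chooses a set $V_t$ of $s-r$ vertices of $[n]\setminus U_t$ (when $r=s$, $V_t=\emptyset$), and the edge $U_t\cup V_t$ is added to form $G^{(r,s)}_t$ (parallel edges allowed). A strategy is, for each $n$, a sequence of functions determining $V_t$ from $(U_1,V_1,\dots,U_{t-1},V_{t-1},U_t)$. A.a.s. means with probability tending to $1$ as $n\to\infty$. ''Contains $H$'' means has a sub-hypergraph isomorphic to $H$. ''$\tau^{(r)}(H)\ge f$'' means for every strategy and every $t=o(f(n))$, a.a.s. $G^{(r,s)}_t$ does not contain $H$. For an $s$-graph $H$ write $v_H=|V(H)|$, $e_H=|E(H)|$, $f^{(r)}(H)=\frac{e_H}{v_H-s+r}$ and $\mu^{(r)}(H)=\max\{f^{(r)}(H'):\ H'\subseteq H,\ v_{H'}\ge s\}$, the maximum over sub-hypergraphs $H'$ of $H$ with at least $s$ vertices. *)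

(* Defs.v *)
From HB Require Import structures.
From mathcomp Require Import all_boot all_order all_algebra.
From mathcomp Require Import all_classical all_reals all_analysis.
Set Implicit Arguments. Unset Strict Implicit. Unset Printing Implicit Defensive.
Import Order.TTheory GRing.Theory Num.Theory.
Import numFieldNormedType.Exports.
Local Open Scope ring_scope.

Definition uniform (s v : nat) (E : {set {set 'I_v}}) : Prop :=
  forall e, e \in E -> #|e| = s.

Definition fr (R : realType) (r s : nat) (v : nat)
  (W : {set 'I_v}) (F : {set {set 'I_v}}) : R :=
  #|F|%:R / ((#|W| - s + r)%N)%:R.

Definition subhg (v : nat) (E : {set {set 'I_v}}) (W : {set 'I_v}) (F : {set {set 'I_v}}) : bool :=
  (F \subset E) && [forall e in F, e \subset W].

(* mu^{(r)}(H) = max of f^{(r)}(H') over sub-hypergraphs H' with at least s vertices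
   (all values are >= 0, and the index set is nonempty when v >= s). *)
Definition mu (R : realType) (r s v : nat) (E : {set {set 'I_v}}) : R :=
  \big[Num.max/0]_(W : {set 'I_v} | (s <= #|W|)%N)
    \big[Num.max/0]_(F : {set {set 'I_v}} | subhg E W F) fr R r s W F.

(* A strategy: for each n, a function from the history ((U_1,V_1),...,(U_{t-1},V_{t-1}))
   and the current random set U_t to the chosen set V_t. *)
Definition strategy := forall n : nat, seq ({set 'I_n} * {set 'I_n}) -> {set 'I_n} -> {set 'I_n}.

Definition valid_strategy (r s : nat) (st : strategy) : Prop :=
  forall n, (s <= n)%N -> forall hist (U : {set 'I_n}), #|U| = r ->
    #|st n hist U| = (s - r)%N /\ [disjoint U & st n hist U].

Definition run (st : strategy) (n : nat) (us : seq {set 'I_n}) : seq ({set 'I_n} * {set 'I_n}) :=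
  foldl (fun hist U => rcons hist (U, st n hist U)) [::] us.

Definition edges (st : strategy) (n : nat) (us : seq {set 'I_n}) : seq {set 'I_n} :=
  map (fun p => p.1 :|: p.2) (@run st n us).

(* G contains a copy of the (simple) hypergraph H = ('I_v, E): an injective vertex map
   sending every edge of H to an edge of G (distinct edges of H go to distinct edges of G
   by injectivity). *)
Definition contains (v n : nat) (E : {set {set 'I_v}}) (G : seq {set 'I_n}) : bool :=
  [exists f : {ffun 'I_v -> 'I_n}, injectiveb f && [forall e in E, (f @: e) \in G]].

(* Probability that G_t does not contain H: U_1..U_t i.i.d. uniform r-subsets of [n]. *)
Definition prob_avoid (R : realType) (r : nat) (st : strategy) (v : nat)
  (E : {set {set 'I_v}}) (n t : nat) : R :=
  #|[set us : t.-tuple {set 'I_n} |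
       [forall i : 'I_t, #|tnth us i| == r] && ~~ contains E (@edges st n us)]|%:R
  / (('C(n, r) ^ t)%N)%:R.

Local Open Scope classical_set_scope.
Definition tau_ge (R : realType) (r s v : nat) (E : {set {set 'I_v}}) (f : nat -> R) : Prop :=
  forall st : strategy, valid_strategy r s st ->
  forall t : nat -> nat,
    (fun n => (t n)%:R / f n) @ \oo --> (0 : R) ->
    (fun n => prob_avoid R r st E n (t n)) @ \oo --> (1 : R).

(* Main.v *)
Require Import Defs.
From HB Require Import structures.
From mathcomp Require Import all_boot all_order all_algebra.
From mathcomp Require Import zify.
Unset Printing Implicit Defensive.

Set Implicit Arguments. Unset Strict Implicit.

Lemma sum_tuple_cons (X : finType) t (F : seq X -> nat) :
  \sum_(us : t.+1.-tuple X) F us = \sum_(x : X) \sum_(us : t.-tuple X) F (x :: us).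
Proof.
rewrite pair_big /=.
rewrite (reindex (fun p : X * t.-tuple X => [tuple of p.1 :: p.2])) /=; last first.
  apply: onW_bij.
  exists (fun us : t.+1.-tuple X => (thead us, [tuple of behead us])).
    by move=> [x u] /=; congr pair; apply: val_inj.
  by move=> us; case/tupleP: us => x u; apply: val_inj.
by apply: eq_bigr => -[x u].
Qed.

Lemma seq_count (X : finType) (x0 : X) (w : nat -> seq X -> X -> nat) (c : nat -> nat) :
  (forall i p, \sum_(x : X) w i p x <= c i) ->
  forall t p, \sum_(us : t.-tuple X)
     \prod_(i < t) w (size p + i) (p ++ take i us) (nth x0 us i)
   <= \prod_(i < t) c (size p + i).
Proof.
move=> hw; elim=> [|t IH] p.
  rewrite big_ord0 (eq_bigr (fun _ => 1)); last by move=> i _; rewrite big_ord0.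
  by rewrite sum1_card card_tuple.
rewrite (@sum_tuple_cons X t (fun us : seq X => \prod_(i < t.+1) w (size p + i) (p ++ take i us) (nth x0 us i))) big_ord_recl addn0.
apply: (@leq_trans (\sum_(x : X) w (size p) p x * \prod_(i < t) c (size p + bump 0 i))); last first.
  by rewrite -big_distrl /= leq_mul2r hw orbT.
apply: leq_sum => x _.
rewrite (eq_bigr (fun us : t.-tuple X => w (size p) p x * \prod_(i < t) w (size (rcons p x) + i) (rcons p x ++ take i us) (nth x0 us i))); last first.
  move=> us _; rewrite big_ord_recl addn0 take0 cats0 /=; congr (_ * _).
  by apply: eq_bigr => i _; rewrite size_rcons /bump add1n addnS -cats1 -catA.
rewrite -big_distrr /= leq_mul2l; apply/orP; right.
have := IH (rcons p x); rewrite size_rcons.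
congr (_ <= _); apply: eq_bigr => i _; rewrite /bump add1n addnS; by rewrite -?addSnnS ?addnS ?addn1.
Qed.

Set Implicit Arguments. Unset Strict Implicit.

Lemma bin_ratio n r b : b <= r -> r <= n ->
  n ^ b * 'C(n - b, r - b) <= r ^ b * 'C(n, r).
Proof.
move=> br rn; elim: b br => [|b IH] br; first by rewrite !expn0 !subn0.
have hb : b <= r by apply: ltnW.
have key : n * 'C(n - b.+1, r - b.+1) <= r * 'C(n - b, r - b).
  have e := mul_bin_diag (n - b) (r - b.+1).
  have e1 : (n - b).-1 = n - b.+1 by lia.
  have e2 : (r - b.+1).+1 = r - b by lia.
  rewrite e1 e2 in e.
  have pos : 0 < n - b by lia.
  rewrite -(leq_pmul2l pos) mulnCA e.
  rewrite mulnA [X in _ <= X]mulnA leq_mul2r; apply/orP; right.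
  have : (n * (r - b) <= r * (n - b)) by rewrite !mulnBr [r * n]mulnC; apply: leq_sub2l; rewrite leq_mul2r rn orbT.
  by rewrite mulnC [X in _ <= X -> _]mulnC.
rewrite expnS -mulnA; apply: (@leq_trans (n ^ b * (r * 'C(n - b, r - b)))); first
  by rewrite mulnCA leq_mul2l key orbT.
rewrite mulnCA expnS -mulnA leq_mul2l IH ?orbT //.
Qed.

Lemma superset_card n (B : {set 'I_n}) r :
  #|[set U : {set 'I_n} | (#|U| == r) && (B \subset U)]| <= 'C(n - #|B|, r - #|B|).
Proof.
have -> : n - #|B| = #|~: B| by have e := cardsC B; rewrite card_ord in e; lia.
rewrite -cards_draws.
rewrite -(@card_in_imset _ _ (fun U => U :\: B)); last first.
  move=> U1 U2; rewrite !inE => /andP[_ h1] /andP[_ h2] e.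
  apply/setP => x; have [xB|xB] := boolP (x \in B).
    by rewrite (subsetP h1 _ xB) (subsetP h2 _ xB).
  by move/setP: e => /(_ x); rewrite !inE xB.
apply: subset_leq_card; apply/subsetP => X /imsetP[U]; rewrite inE => /andP[/eqP hU hB] ->.
rewrite inE; apply/andP; split; first by rewrite setDE subsetIr.
by rewrite cardsD (setIidPr hB) hU.
Qed.

Set Implicit Arguments. Unset Strict Implicit.

Lemma exists_subset_card (T : finType) (X : {set T}) b : b <= #|X| ->
  exists B : {set T}, (B \subset X) && (#|B| == b).
Proof.
move=> hb; have : 0 < #|[set A : {set T} | (A \subset X) && (#|A| == b)]|.
  by rewrite cards_draws bin_gt0.
by case/card_gt0P => B; rewrite inE => h; exists B.
Qed.

Lemma pow_le_sum n a r : a <= r ->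
  n ^ a <= \sum_(b < r.+1) (b <= a) * n ^ b.
Proof.
move=> ar; have ha : a < r.+1 by [].
by rewrite (bigD1 (Ordinal ha)) //= leqnn mul1n leq_addr.
Qed.

Lemma count_b n r (O : {set 'I_n}) b :
  \sum_(U : {set 'I_n}) (#|U| == r) * (b <= #|U :&: O|)
  <= \sum_(B : {set 'I_n} | (B \subset O) && (#|B| == b))
        #|[set U : {set 'I_n} | (#|U| == r) && (B \subset U)]|.
Proof.
under [X in _ <= X]eq_bigr => B _ do rewrite -sum1_card.
rewrite (exchange_big_dep xpredT) //=.
apply: leq_sum => U _.
case: eqP => hU; rewrite ?mul0n // mul1n.
case hb: (b <= #|U :&: O|); last by [].
have [B /andP[BO /eqP Bb]] := exists_subset_card hb.
have BU : B \subset U by apply: (subset_trans BO); apply: subsetIl.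
have BO' : B \subset O by apply: (subset_trans BO); apply: subsetIr.
rewrite (bigD1 B) /=; last by rewrite Bb eqxx BO' inE hU eqxx BU.
by rewrite leq_addr.
Qed.

Lemma step_bound n r (O : {set 'I_n}) : 0 < r -> r <= n ->
  \sum_(U : {set 'I_n}) (#|U| == r) * n ^ #|U :&: O|
   <= (r.+1 * 2 ^ #|O| * r ^ r) * 'C(n, r).
Proof.
move=> r0 rn.
apply: (@leq_trans (\sum_(U : {set 'I_n}) \sum_(b < r.+1) n ^ b * ((#|U| == r) * (b <= #|U :&: O|)))).
  apply: leq_sum => U _; case: eqP => hU; rewrite ?mul0n.
    have ha : #|U :&: O| <= r by rewrite -hU; apply/subset_leq_card/subsetIl.
    rewrite mul1n; apply: (leq_trans (pow_le_sum n ha)).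
    by apply: leq_sum => b _; rewrite mul1n mulnC.
  by [].
rewrite exchange_big /=.
have -> : r.+1 * 2 ^ #|O| * r ^ r * 'C(n, r) = \sum_(b < r.+1) (2 ^ #|O| * r ^ r * 'C(n, r)).
  by rewrite sum_nat_const card_ord !mulnA.
apply: leq_sum => b _; rewrite -big_distrr /=.
apply: (@leq_trans (n ^ b * \sum_(B : {set 'I_n} | (B \subset O) && (#|B| == b))
        #|[set U : {set 'I_n} | (#|U| == r) && (B \subset U)]|)).
  by rewrite leq_mul2l count_b orbT.
rewrite big_distrr /=.
have hbr : b <= r by rewrite -ltnS.
apply: (@leq_trans (\sum_(B : {set 'I_n} | (B \subset O) && (#|B| == b)) r ^ b * 'C(n, r))).
  apply: leq_sum => B /andP[_ /eqP Bb].
  apply: (@leq_trans (n ^ b * 'C(n - b, r - b))); last exact: bin_ratio.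
  by rewrite leq_mul2l -Bb superset_card orbT.
rewrite big_const iter_addn addn0 mulnC mulnA leq_mul2r; apply/orP; right.
apply: leq_mul; last by apply: leq_pexp2l.
rewrite -card_powerset; apply: subset_leq_card; apply/subsetP => A.
by rewrite !inE => /andP[].
Qed.

Unset Implicit Arguments. Set Strict Implicit.

Section Run.
Variables (st : strategy) (n : nat).

Lemma run_rcons (us : seq {set 'I_n}) x : run st (rcons us x) = rcons (run st us) (x, st n (run st us) x).
Proof. by rewrite /run foldl_rcons. Qed.

Lemma map_fst_run (us : seq {set 'I_n}) : map fst (run st us) = us.
Proof.
elim/last_ind: us => [|us x IH]; first by [].
by rewrite run_rcons map_rcons IH.
Qed.

Lemma size_run (us : seq {set 'I_n}) : size (run st us) = size us.
Proof. by rewrite -{2}(map_fst_run us) size_map. Qed.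

Lemma foldl_prefix (h : seq ({set 'I_n} * {set 'I_n})) (s : seq {set 'I_n}) :
  take (size h) (foldl (fun hist U => rcons hist (U, st n hist U)) h s) = h.
Proof.
elim: s h => [|x s IH] h /=; first by rewrite take_size.
have := IH (rcons h (x, st n h x)); rewrite size_rcons => e.
by rewrite -(take_takel _ (leqnSn (size h))) e -cats1 take_size_cat.
Qed.

Lemma take_run i (us : seq {set 'I_n}) : take i (run st us) = run st (take i us).
Proof.
have [hi|hi] := leqP (size us) i.
  by rewrite !take_oversize // size_run.
rewrite -{1}(cat_take_drop i us) /run foldl_cat.
have := foldl_prefix (foldl (fun hist U => rcons hist (U, st n hist U)) [::] (take i us)) (drop i us).
by rewrite -/(run st (take i us)) size_run size_take hi.
Qed.

Lemma nth_edges_take i j (us : seq {set 'I_n}) : j < i ->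
  nth set0 (edges st (take i us)) j = nth set0 (edges st us) j.
Proof.
by move=> ji; rewrite /edges -take_run map_take nth_take.
Qed.

Lemma size_edges (us : seq {set 'I_n}) : size (edges st us) = size us.
Proof. by rewrite size_map size_run. Qed.

Lemma sub_edge i (us : seq {set 'I_n}) : i < size us -> nth set0 us i \subset nth set0 (edges st us) i.
Proof.
move=> hi; rewrite /edges (nth_map (set0, set0)) ?size_run //.
rewrite -{1}(map_fst_run us) (nth_map (set0, set0)) ?size_run //.
exact: subsetUl.
Qed.
End Run.

Unset Implicit Arguments. Set Strict Implicit.

Lemma comb (T : finType) t (I : {set 'I_t}) (G U : 'I_t -> {set T}) (r s : nat) :
  (forall i, i \in I -> [&& U i \subset G i, #|U i| == r & s <= #|G i|]) ->
  I != set0 ->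
  r * #|I| + s <= #|\bigcup_(i in I) G i|
     + \sum_(i in I) #|U i :&: \bigcup_(j in I | j < i) G j| + r.
Proof.
move=> hI.
pose J k := [set i in I | i < k].
suff H : forall k, J k != set0 -> r * #|J k| + s <= #|\bigcup_(i in J k) G i|
     + \sum_(i in J k) #|U i :&: \bigcup_(j in I | j < i) G j| + r.
  have eIJ : I = J t by apply/setP => i; rewrite !inE ltn_ord andbT.
  by move=> I0; have := H t; rewrite -eIJ; apply.
elim=> [|k IH].
  move=> H0; exfalso; move/negP: H0; apply; apply/eqP/setP => i.
  by rewrite !inE ltn0 andbF.
have [kt|kt] := ltnP k t; last first.
  have -> : J k.+1 = J k; last exact: IH.
  apply/setP => i; rewrite !inE ltnS; congr (_ && _).
  by rewrite leq_eqVlt; have := ltn_ord i; case: eqP => // ->; rewrite ltnNge kt.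
pose i0 := Ordinal kt.
have [i0I|i0I] := boolP (i0 \in I); last first.
  have -> : J k.+1 = J k; last exact: IH.
  apply/setP => i; rewrite !inE ltnS leq_eqVlt.
  case: (eqVneq (nat_of_ord i) k) => [e|ne] //=.
  have -> : i = i0 by apply: val_inj.
  by rewrite (negPf i0I).
have eJ : J k.+1 = i0 |: J k.
  apply/setP => i; rewrite !inE ltnS leq_eqVlt.
  case: (eqVneq (nat_of_ord i) k) => [e|ne] /=.
    have -> : i = i0 by apply: val_inj.
    by rewrite eqxx i0I.
  have -> : (i == i0) = false by apply/negP => /eqP ei; rewrite ei eqxx in ne.
  by [].
have ni0 : i0 \notin J k by rewrite !inE ltnn andbF.
have eO : \bigcup_(j in I | j < i0) G j = \bigcup_(j in J k) G j.
  by apply: eq_bigl => j; rewrite !inE.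
rewrite eJ big_setU1 //= big_setU1 //= cardsU1 ni0 eO /=.
have := hI i0 i0I => /and3P[UG /eqP Ur sG].
have [J0|Jn0] := eqVneq (J k) set0.
  rewrite J0 !big_set0 cards0 setI0 cards0 setU0 /=; lia.
have := IH Jn0.
set X := \bigcup_(i in J k) G i.
set S := \sum_(i in J k) _.
have h1 : #|U i0 :|: X| <= #|G i0 :|: X| by apply: subset_leq_card; apply: setSU.
have h2 := cardsUI (U i0) X.
move=> IHk _; rewrite mulnDr muln1.
have h3 : #|X| + r <= #|G i0 :|: X| + #|U i0 :&: X| by rewrite addnC -Ur -h2 leq_add2r.
move: IHk h3; set d := #|J k|; clearbody X S d. match goal with |- ?g => idtac g end. lia.
Qed.

Set Implicit Arguments. Unset Strict Implicit.

Lemma card_bigcup_le (T I : finType) (P : pred I) (F : I -> {set T}) :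
  #|\bigcup_(i | P i) F i| <= \sum_(i | P i) #|F i|.
Proof.
apply: (big_ind2 (fun (A : {set T}) k => #|A| <= k)); first by rewrite cards0.
  move=> A1 k1 A2 k2 h1 h2; rewrite cardsU.
  by apply: leq_trans (leq_subr _ _) _; apply: leq_add.
by move=> i _.
Qed.

Definition Oset (st : strategy) n s t (I : {set 'I_t}) (i : nat) (p : seq {set 'I_n}) : {set 'I_n} :=
  \bigcup_(j in I | (j < i) && (#|nth set0 (edges st p) j| <= s)) nth set0 (edges st p) j.

Definition inI t (I : {set 'I_t}) (i : nat) := [exists j in I, val j == i].

Definition wt (st : strategy) n r s t (I : {set 'I_t}) (i : nat) (p : seq {set 'I_n}) (U : {set 'I_n}) : nat :=
  (#|U| == r) * n ^ (if inI I i then #|U :&: Oset st s I i p| else 0).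

Lemma inI_ord t (I : {set 'I_t}) (i : 'I_t) : inI I i = (i \in I).
Proof.
apply/existsP/idP => [[j /andP[jI /eqP e]]|iI]; last by exists i; rewrite iI eqxx.
by have <- : j = i by apply: val_inj.
Qed.

Lemma card_Oset (st : strategy) n s t (I : {set 'I_t}) i (p : seq {set 'I_n}) :
  #|Oset st s I i p| <= #|I| * s.
Proof.
apply: (leq_trans (card_bigcup_le _ _)).
apply: (@leq_trans (\sum_(j in I) s)); last by rewrite sum_nat_const.
rewrite [X in _ <= X]big_mkcond [X in X <= _]big_mkcond /=.
apply: leq_sum => j _; case: (j \in I) => //=.
by case: andP => // -[].
Qed.

Lemma step_w (st : strategy) n r s t (I : {set 'I_t}) i (p : seq {set 'I_n}) : 0 < r -> r <= n ->
  \sum_(U : {set 'I_n}) wt st r s I i p U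
   <= (if inI I i then r.+1 * 2 ^ (#|I| * s) * r ^ r else 1) * 'C(n, r).
Proof.
move=> r0 rn; rewrite /wt; case: (inI I i).
  apply: (leq_trans (step_bound _ r0 rn)).
  rewrite leq_mul2r; apply/orP; right; rewrite leq_mul2r; apply/orP; right.
  by rewrite leq_mul2l leq_exp2l // card_Oset orbT.
rewrite mul1n; under eq_bigr => U _ do rewrite expn0 muln1.
have -> : 'C(n, r) = #|[set U : {set 'I_n} | #|U| == r]| by rewrite card_draws card_ord.
rewrite -sum1dep_card [X in _ <= X]big_mkcond /=.
by apply: leq_sum => U _; case: (#|U| == r).
Qed.

Lemma per_I (st : strategy) n r s t (I : {set 'I_t}) : 0 < r -> r <= n ->
  \sum_(us : t.-tuple {set 'I_n})
     \prod_(i < t) wt st r s I i (take i us) (nth set0 us i)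
  <= (r.+1 * 2 ^ (#|I| * s) * r ^ r) ^ #|I| * 'C(n, r) ^ t.
Proof.
move=> r0 rn.
have := @seq_count _ set0 (wt st r s I) _ (fun i p => step_w st s I i p r0 rn) t [::].
move=> /= h; apply: leq_trans h _.
rewrite big_split /= prod_nat_const card_ord.
rewrite leq_mul2r; apply/orP; right.
rewrite -prod_nat_const (big_mkcond (fun i => i \in I)) /=.
by apply/eq_leq/eq_bigr => i _; rewrite inI_ord.
Qed.

Set Implicit Arguments. Unset Strict Implicit.

Lemma per_us (st : strategy) (r s v : nat) (E : {set {set 'I_v}}) (W : {set 'I_v})
  (Fs : {set {set 'I_v}}) n t (us : t.-tuple {set 'I_n}) :
  0 < r -> r <= s -> s <= n -> uniform s E -> subhg E W Fs -> 0 < #|Fs| ->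
  [forall i : 'I_t, #|tnth us i| == r] -> contains E (edges st us) ->
  n ^ ((s + r * #|Fs|) - (r + #|W|)) <=
  \sum_(I : {set 'I_t} | #|I| == #|Fs|) \prod_(i < t) wt st r s I i (take i us) (nth set0 us i).
Proof.
move=> r0 rs sn unif /andP[FE /forallP FW] F0 /forallP allr /existsP[f /andP[/injectiveP finj /forallP fE]].
set G := edges st us.
have sG : size G = t by rewrite /G size_edges size_tuple.
set Im := (fun e : {set 'I_v} => f @: e) @: Fs.
have ImG : forall X, X \in Im -> X \in G.
  move=> X /imsetP[e eF ->]; have := fE e; rewrite (subsetP FE _ eF); apply.
have ImS : forall X, X \in Im -> #|X| = s.
  move=> X /imsetP[e eF ->]; rewrite card_imset //; apply: unif; exact: (subsetP FE _ eF).
have ImW : forall X, X \in Im -> X \subset f @: W.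
  by move=> X /imsetP[e eF ->]; apply: imsetS; have := FW e; rewrite eF; apply.
set I := [set i : 'I_t | (nth set0 G i \in Im) && (index (nth set0 G i) G == i)].
have cardI : #|I| = #|Fs|.
  have e1 : #|I| = #|((fun i : 'I_t => nth set0 G i) @: I)|.
    rewrite card_in_imset // => i j; rewrite !inE => /andP[_ /eqP hi] /andP[_ /eqP hj] e.
    by apply: val_inj; rewrite /= -hi -hj e.
  have e2 : ((fun i : 'I_t => nth set0 G i) @: I) = Im.
    apply/setP => X; apply/imsetP/idP => [[i]|XI]; first by rewrite inE => /andP[h _] ->.
    have hX := ImG X XI; have hi : index X G < t by rewrite -sG index_mem.
    exists (Ordinal hi); last by rewrite /= nth_index.
    by rewrite inE /= nth_index // XI eqxx.
  rewrite e1 e2 card_in_imset //; move=> e e' _ _; exact: imset_inj.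
have hI : forall i, i \in I ->
    [&& nth set0 us i \subset nth set0 G i, #|nth set0 us i| == r & s <= #|nth set0 G i|].
  move=> i; rewrite inE => /andP[iIm _].
  rewrite sub_edge ?size_tuple ?ltn_ord //= -(tnth_nth set0) allr /=.
  by rewrite ImS.
have I0 : I != set0 by rewrite -card_gt0 cardI.
have := @comb _ _ I (fun i : 'I_t => nth set0 G i) (fun i : 'I_t => nth set0 us i) r s hI I0.
rewrite /= cardI.
have hW : #|\bigcup_(i in I) nth set0 G i| <= #|W|.
  apply: leq_trans (leq_imset_card f W); apply: subset_leq_card.
  by apply/bigcupsP => i; rewrite inE => /andP[iIm _]; apply: ImW.
set S := \sum_(i in I) _.
move=> hc.
have hK : (s + r * #|Fs|) - (r + #|W|) <= S.
  by move: hc hW; set B := #|\bigcup_(i in I) nth set0 G i|; clearbody S B; lia.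
rewrite (bigD1 I) /=; last by rewrite cardI eqxx.
apply: leq_trans (leq_addr _ _).
have n0 : 0 < n by apply: leq_trans r0 (leq_trans rs sn).
apply: (leq_trans (leq_pexp2l n0 hK)); apply: eq_leq.
rewrite /wt.
under eq_bigr => i _ do rewrite -(tnth_nth set0) allr mul1n.
rewrite -expn_sum; congr (n ^ _).
rewrite /S [LHS]big_mkcond /=; apply: eq_bigr => i _; rewrite inI_ord -(tnth_nth set0).
case: ifP => iI //; congr (#|_ :&: _|).
rewrite /Oset; apply: eq_big => j; last first.
  by case/andP => jI ji; rewrite nth_edges_take.
case jI: (j \in I) => //=; case ji: (j < i) => //=.
rewrite nth_edges_take // -/G ImS ?leqnn //.
by move: jI; rewrite inE => /andP[].
Qed.

Lemma bad_count (st : strategy) (r s v : nat) (E : {set {set 'I_v}}) (W : {set 'I_v})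
  (Fs : {set {set 'I_v}}) n t :
  0 < r -> r <= s -> s <= n -> uniform s E -> subhg E W Fs -> 0 < #|Fs| ->
  n ^ ((s + r * #|Fs|) - (r + #|W|)) *
  #|[set us : t.-tuple {set 'I_n} | [forall i : 'I_t, #|tnth us i| == r] && contains E (edges st us)]|
   <= 'C(t, #|Fs|) * ((r.+1 * 2 ^ (#|Fs| * s) * r ^ r) ^ #|Fs| * 'C(n, r) ^ t).
Proof.
move=> r0 rs sn unif sub F0.
rewrite -sum1dep_card big_distrr /=.
apply: (@leq_trans (\sum_(us : t.-tuple {set 'I_n})
   \sum_(I : {set 'I_t} | #|I| == #|Fs|) \prod_(i < t) wt st r s I i (take i us) (nth set0 us i))).
  rewrite [X in X <= _]big_mkcond /=; apply: leq_sum => us _.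
  case: ifP => // /andP[h1 h2]; rewrite muln1.
  exact: (@per_us st r s v E W Fs n t us r0 rs sn unif sub F0 h1 h2).
rewrite exchange_big /=.
apply: (@leq_trans (\sum_(I : {set 'I_t} | #|I| == #|Fs|)
   ((r.+1 * 2 ^ (#|Fs| * s) * r ^ r) ^ #|Fs| * 'C(n, r) ^ t))).
  apply: leq_sum => I /eqP cI; rewrite -cI.
  by apply: per_I => //; apply: leq_trans sn.
rewrite big_const iter_addn addn0 mulnC leq_mul2r; apply/orP; right.
by rewrite -[X in 'C(X, _)](card_ord t) -card_draws; apply/eq_leq/eq_card => I; rewrite inE.
Qed.

Set Implicit Arguments. Unset Strict Implicit.

Lemma sum_prod_tuple (X : finType) (x0 : X) (g : X -> nat) t :
  \sum_(us : t.-tuple X) \prod_(i < t) g (nth x0 us i) = (\sum_(x : X) g x) ^ t.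
Proof.
elim: t => [|t IH].
  rewrite expn0 (eq_bigr (fun _ => 1)); last by move=> i _; rewrite big_ord0.
  by rewrite sum1_card card_tuple.
rewrite (@sum_tuple_cons X t (fun us : seq X => \prod_(i < t.+1) g (nth x0 us i))).
rewrite expnS big_distrl /=; apply: eq_bigr => x _.
rewrite -IH big_distrr /=; apply: eq_bigr => us _.
by rewrite big_ord_recl.
Qed.

Lemma prod_bool (I : finType) (b : pred I) : \prod_(i : I) (b i : nat) = [forall i, b i].
Proof.
case: (boolP [forall i, b i]) => [/forallP h|/forallPn [i hi]].
  by rewrite big1 // => i _; rewrite h.
by rewrite (bigD1 i) //= (negPf hi) mul0n.
Qed.

Lemma count_allr n r t :
  #|[set us : t.-tuple {set 'I_n} | [forall i : 'I_t, #|tnth us i| == r]]| = 'C(n, r) ^ t.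
Proof.
rewrite -sum1dep_card big_mkcond /=.
rewrite (eq_bigr (fun us : t.-tuple {set 'I_n} => \prod_(i < t) (#|nth set0 us i| == r : nat))).
  rewrite (@sum_prod_tuple _ set0 (fun U : {set 'I_n} => (#|U| == r : nat)) t).
  have -> : \sum_(x : {set 'I_n}) (#|x| == r : nat) = #|[set U : {set 'I_n} | #|U| == r]|.
    by rewrite -sum1dep_card [RHS]big_mkcond.
  by rewrite card_draws card_ord.
move=> us _; rewrite prod_bool.
have -> : [forall i : 'I_t, #|nth set0 us i| == r] = [forall i : 'I_t, #|tnth us i| == r].
  by apply: eq_forallb => i; rewrite (tnth_nth set0).
by case: ifP.
Qed.

Lemma count_split (T : finType) (A B : pred T) :
  #|[set x | A x && ~~ B x]| + #|[set x | A x && B x]| = #|[set x | A x]|.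
Proof.
rewrite -!sum1dep_card [X in X + _]big_mkcond [X in _ + X]big_mkcond [RHS]big_mkcond -big_split /=; apply: eq_bigr => x _.
by case: (A x); case: (B x).
Qed.

Lemma bin_le_exp t m : 'C(t, m) <= t ^ m.
Proof.
apply: (@leq_trans ('C(t, m) * m`!)); first by rewrite leq_pmulr ?fact_gt0.
rewrite bin_ffact ffact_prod; apply: (@leq_trans (\prod_(i < m) t)).
  by apply: leq_prod => i _; apply: leq_subr.
by rewrite prod_nat_const card_ord.
Qed.



From mathcomp Require Import all_classical all_reals all_analysis.
Import Order.TTheory GRing.Theory Num.Theory.
Import numFieldNormedType.Exports.
Local Open Scope ring_scope.
Set Implicit Arguments. Unset Strict Implicit.

Section MaxR.
Variable R : realType.
Lemma bigmax_ge (I : eqType) (s : seq I) (P : pred I) (F : I -> R) i0 :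
  i0 \in s -> P i0 -> F i0 <= \big[Num.max/0]_(i <- s | P i) F i.
Proof.
elim: s => // a s IH; rewrite in_cons big_cons => /orP[/eqP <-|h] Pi.
  by rewrite Pi le_max lexx.
by case: ifP => _; rewrite ?IH // le_max IH ?orbT.
Qed.

Lemma bigmax_mem (I : finType) (P : pred I) (F : I -> R) :
  \big[Num.max/0]_(i | P i) F i = 0 \/ exists i, P i /\ \big[Num.max/0]_(i | P i) F i = F i.
Proof.
apply: (big_ind (fun x => x = 0 \/ exists i, P i /\ x = F i)); first by left.
  by move=> x y hx hy; case: leP.
by move=> i Pi; right; exists i.
Qed.
End MaxR.

Local Open Scope classical_set_scope.
Unset Implicit Arguments. Set Strict Implicit.

Lemma real_bound (R : realType) (ng nb C T n m K d r K0 : nat) :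
  (0 < C)%N -> (0 < n)%N -> (0 < m)%N -> (r * m <= K + d)%N ->
  (ng + nb = C ^ T)%N -> (n ^ K * nb <= T ^ m * (K0 * C ^ T))%N ->
  1 - K0%:R * ((T%:R : R) / n%:R `^ (r%:R - d%:R / m%:R)) ^+ m <= ng%:R / (C ^ T)%:R.
Proof.
move=> C0 n0 m0 hKd hsum hbad.
have Q0 : (0 : R) < (C ^ T)%:R by rewrite ltr0n expn_gt0 C0.
have nR0 : (0 : R) < n%:R by rewrite ltr0n.
have nK0 : (0 : R) < n%:R ^+ K by rewrite exprn_gt0.
have -> : (ng%:R : R) / (C ^ T)%:R = 1 - nb%:R / (C ^ T)%:R.
  have Qn0 : ((C ^ T)%:R : R) != 0 by rewrite gt_eqF.
  rewrite -[X in X - _](divff Qn0) -mulrBl; congr (_ / _).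
  by rewrite -hsum natrD addrK.
rewrite lerD2l lerN2.
have h1 : (nb%:R : R) / (C ^ T)%:R <= K0%:R * (T%:R ^+ m / n%:R ^+ K).
  rewrite ler_pdivrMr // mulrA mulrAC ler_pdivlMr //.
  have := hbad; rewrite -(ler_nat R) !natrM !natrX => h.
  by rewrite mulrC (le_trans h) // mulrCA mulrA.
apply: (le_trans h1); apply: ler_wpM2l; first by rewrite ler0n.
set a := (r%:R - d%:R / m%:R : R).
have ha : n%:R `^ a ^+ m = n%:R `^ ((r * m)%:R - d%:R).
  rewrite -powR_mulrn ?powR_ge0 // -powRrM; congr (_ `^ _).
  rewrite /a mulrBl natrM -mulrA mulVf ?mulr1 //; last by rewrite gt_eqF // ltr0n.
rewrite exprMn exprVn ha ler_wpM2l ?exprn_ge0 ?ler0n //.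
rewrite lef_pV2 ?posrE ?powR_gt0 //.
rewrite -powR_mulrn ?ler0n //; apply: ler_powR; first by rewrite ler1n.
by rewrite lerBlDr -natrD ler_nat.
Qed.

Unset Implicit Arguments. Set Strict Implicit.

Lemma cvg_pow0 (R : realType) (g : nat -> R) (m : nat) :
  g @ \oo --> (0 : R) -> (fun n => g n ^+ m.+1) @ \oo --> (0 : R).
Proof.
move=> hg; elim: m => [|m IH].
  by rewrite (_ : (fun n => g n ^+ 1) = g) //; apply/funext => n; rewrite expr1.
have -> : (fun n => g n ^+ m.+2) = g \* (fun n => g n ^+ m.+1).
  by apply/funext => n; rewrite /= exprS.
rewrite -(mul0r 0); exact: cvgM.
Qed.

Theorem corollary3 (R : realType) (r s v : nat) (E : {set {set 'I_v}}) :
  (1 <= r)%N -> (r <= s)%N -> (s <= v)%N -> uniform s E -> (0 < #|E|)%N ->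
  @tau_ge R r s v E (fun n => n%:R `^ (r%:R - (mu R r s E)^-1)).
Proof.
move=> r1 rs sv unif E0 st _ t ht.
set inner := fun W : {set 'I_v} =>
  \big[Num.max/0]_(F : {set {set 'I_v}} | subhg E W F) fr R r s W F.
have muE : mu R r s E = \big[Num.max/0]_(W : {set 'I_v} | (s <= #|W|)%N) inner W by [].
have hsub : subhg E (finset.setT : {set 'I_v}) E.
  by rewrite /subhg subxx; apply/forallP => e; apply/implyP => _; apply: finset.subsetT.
have fr_pos : 0 < fr R r s (finset.setT : {set 'I_v}) E.
  rewrite /fr divr_gt0 // ltr0n // cardsT card_ord; lia.
have mu_pos : 0 < mu R r s E.
  apply: (lt_le_trans fr_pos); rewrite muE.
  have h1 : fr R r s (finset.setT : {set 'I_v}) E <= inner finset.setT.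
    exact: (@bigmax_ge R _ _ (subhg E finset.setT) (fr R r s finset.setT) E (mem_index_enum E) hsub).
  apply: (le_trans h1).
  apply: (@bigmax_ge R _ _ (fun W : {set 'I_v} => (s <= #|W|)%N) inner finset.setT (mem_index_enum _)).
  by rewrite /= cardsT card_ord.
have [mu0|[W [Ws hW]]] := bigmax_mem (fun W : {set 'I_v} => (s <= #|W|)%N) inner.
  by move: mu_pos; rewrite muE mu0 ltxx.
have [in0|[F [hF hF']]] := bigmax_mem (subhg E W) (fr R r s W).
  by move: mu_pos; rewrite muE hW /inner in0 ltxx.
have hmu : mu R r s E = fr R r s W F by rewrite muE hW /inner hF'.
set m := #|F|.
set d := (#|W| - s + r)%N.
have m0 : (0 < m)%N.
  rewrite lt0n; apply/negP => /eqP m0; move: mu_pos; rewrite hmu /fr -/m m0 mul0r ltxx.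
  by [].
have muinv : (mu R r s E)^-1 = d%:R / m%:R by rewrite hmu /fr invf_div.
set K := ((s + r * m) - (r + #|W|))%N.
have hKd : (r * m <= K + d)%N by rewrite /K /d; lia.
set K0 := ((r.+1 * 2 ^ (m * s) * r ^ r) ^ m)%N.
set g := fun n => (t n)%:R / n%:R `^ (r%:R - d%:R / m%:R) : R.
have hg : g @ \oo --> (0 : R) by move: ht; rewrite muinv.
have hlow : (fun n => 1 - K0%:R * g n ^+ m) @ \oo --> (1 : R).
  have := cvgB (cvg_cst (1 : R)) (cvgM (cvg_cst (K0%:R : R)) (@cvg_pow0 R g m.-1 hg)).
  by rewrite mulr0 subr0 prednK //; apply.
apply: (squeeze_cvgr _ hlow (cvg_cst (1 : R))).
near=> n.
have sn : (s <= n)%N by near: n; apply: nbhs_infty_ge.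
have rn : (r <= n)%N by apply: leq_trans sn.
have C0 : (0 < 'C(n, r))%N by rewrite bin_gt0.
have n0 : (0 < n)%N by apply: leq_trans rn.
set A := fun us : (t n).-tuple {set 'I_n} => [forall i : 'I_(t n), #|tnth us i| == r].
set B := fun us : (t n).-tuple {set 'I_n} => contains E (edges st us).
have hsum := count_split A B; rewrite /A count_allr in hsum.
have hbad := @bad_count st r s v E W F n (t n) r1 rs sn unif hF m0.
apply/andP; split.
  apply: (@real_bound R _ _ _ _ _ _ _ _ _ K0 C0 n0 m0 hKd hsum).
  apply: (leq_trans hbad); rewrite -/K -/m mulnA [X in (_ <= X)%N]mulnA leq_mul2r; apply/orP; right.
  by rewrite leq_mul2r bin_le_exp orbT.
rewrite /prob_avoid ler_pdivrMr ?mul1r ?ltr0n ?expn_gt0 ?C0 // ler_nat -hsum.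
exact: leq_addr.
Unshelve. all: end_near.
Qed.
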